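(* Let $I$ be a set with decidable equality, and let $(X_\alpha)_{\alpha\in I}$ be a family of locales each of which is positive and overt. Then the product locale $\prod_{\alpha\in I}X_\alpha$ is positive and overt.
   Context: Work constructively: neither excluded middle nor any form of choice is assumed. Frames and locales: a frame is a poset with finite meets and arbitrary joins with $a\wedge\bigvee_i b_i=\bigvee_i a\wedge b_i$; locales form the opposite category. $\mathcal{O}X$ denotes the frame of a locale $X$, and $\Omega$ is the initial frame of truth values, $\mathcal{O}1=\Omega$. The unique map ${!}\colon X\to1$ has ${!}^*(p)=\bigvee\{1\mid p=\top\}$. Positivity and overtness: $u\in\mathcal{O}X$ is positive if whenever $u\le\bigvee S$ the set $S$ is inhabited. $X$ is positive if $1$ is positive. $X$ is overt if ${!}^*\colon\Omega\to\mathcal{O}X$ has a left adjoint. Decidable equality: a set $I$ has decidable equality if $\forall \alpha,\beta\in I.\ \alpha=\beta\vee\alpha\ne\beta$. Products: the product of locales is the coproduct of frames. $\mathcal{O}(\prod_\alpha X_\alpha)$ is presented by generators $\iota_\alpha(u)$ for $\alpha\in I$ and $u\in\mathcal{O}X_\alpha$, with relations making each $\iota_\alpha$ a frame homomorphism. *)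

(* Defs.v *)
Record Frame : Type := {
  carrier :> Type;
  le : carrier -> carrier -> Prop;
  le_refl : forall a, le a a;
  le_trans : forall a b c, le a b -> le b c -> le a c;
  le_antisym : forall a b, le a b -> le b a -> a = b;
  top : carrier;
  top_spec : forall a, le a top;
  meet : carrier -> carrier -> carrier;
  meet_spec : forall a b c, le c (meet a b) <-> (le c a /\ le c b);
  join : (carrier -> Prop) -> carrier;
  join_spec : forall (S : carrier -> Prop) c,
      le (join S) c <-> (forall s, S s -> le s c);
  distrib : forall a (S : carrier -> Prop),
      meet a (join S) = join (fun x => exists b, S b /\ x = meet a b)
}.

Arguments le {f} _ _.
Arguments top {f}.
Arguments meet {f} _ _.
Arguments join {f} _.

Definition img {A B : Type} (f : A -> B) (S : A -> Prop) : B -> Prop :=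
  fun y => exists s, S s /\ y = f s.

Definition frame_hom (A B : Frame) (f : A -> B) : Prop :=
  f top = top /\
  (forall a b, f (meet a b) = meet (f a) (f b)) /\
  (forall S : A -> Prop, f (join S) = join (img f S)).

(* [P] with injections [iota] is a coproduct of the frames [X alpha]
   (i.e. O(prod_alpha X_alpha) for the product locale), characterized by
   its universal property in the category of frames. *)
Definition is_frame_coproduct {I : Type} (X : I -> Frame) (P : Frame)
  (iota : forall alpha, X alpha -> P) : Prop :=
  (forall alpha, frame_hom (X alpha) P (iota alpha)) /\
  forall (F : Frame) (f : forall alpha, X alpha -> F),
    (forall alpha, frame_hom (X alpha) F (f alpha)) ->
    (exists g : P -> F, frame_hom P F g /\
        forall alpha x, g (iota alpha x) = f alpha x) /\
    (forall g g' : P -> F,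
        frame_hom P F g -> frame_hom P F g' ->
        (forall alpha x, g (iota alpha x) = f alpha x) ->
        (forall alpha x, g' (iota alpha x) = f alpha x) ->
        forall y, g y = g' y).

Definition positive_elt {X : Frame} (u : X) : Prop :=
  forall S : X -> Prop, le u (join S) -> exists s, S s.

Definition positive_locale (X : Frame) : Prop := positive_elt (@top X).

(* !^* : Omega -> O X, !^*(p) = \/ {1 | p = T}, Omega = Prop ordered by implication. *)
Definition shriek_star (X : Frame) (p : Prop) : X :=
  join (fun x : X => x = top /\ p).

(* X is overt: !^* has a left adjoint  exists_X -| !^*. *)
Definition overt (X : Frame) : Prop :=
  exists ex : X -> Prop,
    forall (u : X) (p : Prop), (ex u -> p) <-> le u (shriek_star X p).

Definition dec_eq (I : Type) : Prop := forall a b : I, a = b \/ a <> b.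

(* Main.v *)
Require Import Defs.
From Stdlib Require Import ProofIrrelevance FunctionalExtensionality PropExtensionality List Eqdep_dec.

Lemma meet_l (F : Frame) (a b : F) : le (meet a b) a.
Proof. apply (proj1 (proj1 (meet_spec F a b (meet a b)) (le_refl F _))). Qed.
Lemma meet_r (F : Frame) (a b : F) : le (meet a b) b.
Proof. apply (proj2 (proj1 (meet_spec F a b (meet a b)) (le_refl F _))). Qed.
Lemma meet_gl (F : Frame) (a b c : F) : le c a -> le c b -> le c (meet a b).
Proof. intros; apply meet_spec; auto. Qed.
Lemma join_ub (F : Frame) (S : F -> Prop) s : S s -> le s (join S).
Proof. intros H. apply (proj1 (join_spec F S (join S)) (le_refl F _)); auto. Qed.
Lemma join_lub (F : Frame) (S : F -> Prop) c : (forall s, S s -> le s c) -> le (join S) c.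
Proof. intros; apply join_spec; auto. Qed.
Lemma join_ext (F : Frame) (S T : F -> Prop) : (forall x, S x <-> T x) -> join S = join T.
Proof.
  intros H; apply le_antisym; apply join_lub; intros s Hs; apply join_ub; apply H; auto.
Qed.
Lemma lt (F : Frame) (a b c : F) : le a b -> le b c -> le a c.
Proof. apply le_trans. Qed.
Lemma meet_comm (F : Frame) (a b : F) : meet a b = meet b a.
Proof. apply le_antisym; apply meet_gl; auto using meet_l, meet_r. Qed.
Lemma meet_mono (F : Frame) (a b c d : F) : le a c -> le b d -> le (meet a b) (meet c d).
Proof. intros; apply meet_gl; eapply le_trans; [apply meet_l| |apply meet_r|]; eauto. Qed.
Lemma meet_top (F : Frame) (a : F) : meet a top = a.
Proof. apply le_antisym. apply meet_l. apply meet_gl; auto using le_refl, top_spec. Qed.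
Lemma top_meet (F : Frame) (a : F) : meet top a = a.
Proof. rewrite meet_comm; apply meet_top. Qed.

Lemma hom_mono (A B : Frame) (f : A -> B) : frame_hom A B f -> forall a b, le a b -> le (f a) (f b).
Proof.
  intros [_ [Hm _]] a b H.
  assert (E : meet a b = a) by (apply le_antisym; [apply meet_l | apply meet_gl; auto using le_refl]).
  rewrite <- E, Hm. apply meet_r.
Qed.

Lemma distr_le (F : Frame) (a : F) (S : F -> Prop) :
  le (meet a (join S)) (join (fun x => exists b, S b /\ x = meet a b)).
Proof. rewrite distrib. apply le_refl. Qed.

Lemma pos_up (F : Frame) (u v : F) : positive_elt u -> le u v -> positive_elt v.
Proof. intros H Hle S HS. apply H. eapply le_trans; eauto. Qed.

Lemma overt_facts (X : Frame) : overt X ->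
  (forall u : X, le u (join (fun v => le v u /\ positive_elt v))) /\
  (forall (u : X) T, positive_elt u -> le u (join T) -> exists t, T t /\ positive_elt t).
Proof.
  intros [ex Hex].
  assert (A1 : forall u, le u (shriek_star X (ex u))) by (intros u; apply Hex; auto).
  assert (A2 : forall u : X, positive_elt u -> ex u).
  { intros u Hu. destruct (Hu _ (A1 u)) as [x [_ Hx]]; auto. }
  assert (A3 : forall u : X, ex u -> positive_elt u).
  { intros u Hu S HS. apply (proj2 (Hex u (exists s, S s))); auto.
    eapply le_trans; [exact HS|]. apply join_lub. intros s Hs.
    eapply le_trans; [apply top_spec|]. apply join_ub. split; eauto. }
  split.
  - intros u. 
    assert (H1 : le u (meet u (shriek_star X (ex u)))) by (apply meet_gl; auto using le_refl).
    eapply le_trans; [exact H1|]. unfold shriek_star. rewrite distrib.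
    apply join_lub. intros x [b [[Hb Hp] Hx]]. subst x b. rewrite meet_top.
    apply join_ub. split; auto using le_refl.
  - intros u T Hu HT.
    assert (H : le u (join (fun v => exists t, T t /\ le v t /\ positive_elt v))).
    { eapply le_trans; [exact HT|]. apply join_lub. intros t Ht.
      assert (Ht' : le t (meet t (shriek_star X (ex t)))) by (apply meet_gl; auto using le_refl).
      eapply le_trans; [exact Ht'|]. unfold shriek_star. rewrite distrib.
      apply join_lub. intros x [b [[Hb Hp] Hx]]. subst x b. rewrite meet_top.
      apply join_ub. exists t; auto using le_refl. }
    destruct (Hu _ H) as [v [t [Ht [Hvt Hv]]]]. exists t; split; auto. eapply pos_up; eauto.
Qed.

Definition Cb {I : Type} (X : I -> Frame) := forall a, X a.
Definition cle {I} {X : I -> Frame} (b c : Cb X) := forall a, le (b a) (c a).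
Definition cmeet {I} {X : I -> Frame} (b c : Cb X) : Cb X := fun a => meet (b a) (c a).
Definition delta {I} {X : I -> Frame} (a : I) (s : X a) : Cb X :=
  fun bt => join (fun y => (exists e : a = bt, y = eq_rect a (fun i => carrier (X i)) s bt e)
                      \/ (a <> bt /\ y = top)).
Definition closed {I} {X : I -> Frame} (D : Cb X -> Prop) : Prop :=
  (forall b c, cle b c -> D c -> D b) /\
  (forall b a (S : X a -> Prop), le (b a) (join S) -> (forall s, S s -> D (cmeet b (delta a s))) -> D b).
Definition cl {I} {X : I -> Frame} (A : Cb X -> Prop) : Cb X -> Prop :=
  fun b => forall C, closed C -> (forall x, A x -> C x) -> C b.

Lemma join_single (F : Frame) (s : F) : join (fun y => y = s) = s.
Proof. apply le_antisym. apply join_lub; intros; subst; apply le_refl. apply join_ub; auto. Qed.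

Lemma delta_eq {I} {X : I -> Frame} (hI : dec_eq I) a (s : X a) : delta a s a = s.
Proof.
  unfold delta. transitivity (join (fun y : X a => y = s)); [|apply join_single]. apply join_ext. intros y; split.
  - intros [[e He]|[H _]]; [|congruence].
    rewrite (eq_proofs_unicity_on (hI a) e eq_refl) in He. exact He.
  - intros ->. left. exists eq_refl. reflexivity.
Qed.

Lemma delta_neq {I} {X : I -> Frame} a (s : X a) bt : a <> bt -> delta a s bt = top.
Proof.
  intros H. unfold delta. transitivity (join (fun y : X bt => y = top)); [|apply join_single]. apply join_ext. intros y; split.
  - intros [[e _]|[_ Hy]]; [congruence|auto].
  - intros ->. right. auto.
Qed.

Lemma cl_closed {I} {X : I -> Frame} (A : Cb X -> Prop) : closed (cl A).
Proof.
  split.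
  - intros b c Hbc Hc C HC HA. apply (proj1 HC b c Hbc). apply Hc; auto.
  - intros b a S Hb Hs C HC HA. apply (proj2 HC b a S Hb). intros s Ss. apply Hs; auto.
Qed.

Lemma cl_incl {I} {X : I -> Frame} (A : Cb X -> Prop) x : A x -> cl A x.
Proof. intros H C _ HA; auto. Qed.

Lemma cl_min {I} {X : I -> Frame} (A C : Cb X -> Prop) : closed C -> (forall x, A x -> C x) -> forall x, cl A x -> C x.
Proof. intros HC HA x Hx. apply Hx; auto. Qed.

Lemma cle_refl {I} {X : I -> Frame} (b : Cb X) : cle b b.
Proof. intros a; apply le_refl. Qed.
Lemma cle_trans {I} {X : I -> Frame} (b c d : Cb X) : cle b c -> cle c d -> cle b d.
Proof. intros H1 H2 a; eapply le_trans; eauto. Qed.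
Lemma cmeet_l {I} {X : I -> Frame} (b c : Cb X) : cle (cmeet b c) b.
Proof. intros a; apply meet_l. Qed.
Lemma cmeet_r {I} {X : I -> Frame} (b c : Cb X) : cle (cmeet b c) c.
Proof. intros a; apply meet_r. Qed.
Lemma cmeet_mono {I} {X : I -> Frame} (b c d e : Cb X) : cle b d -> cle c e -> cle (cmeet b c) (cmeet d e).
Proof. intros H1 H2 a; apply meet_mono; auto. Qed.

Lemma loc_closed {I} {X : I -> Frame} (A C : Cb X -> Prop) :
  (forall b c, cle b c -> A c -> A b) -> closed C ->
  closed (fun b => forall b', cle b' b -> A b' -> C b').
Proof.
  intros HA HC. split.
  - intros b c Hbc Hc b' Hb' Ab'. apply Hc; auto. eapply cle_trans; eauto.
  - intros b a S Hb Hs b' Hb' Ab'. apply (proj2 HC b' a S).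
    + eapply le_trans; [apply Hb'|exact Hb].
    + intros s Ss. apply (Hs s Ss). apply cmeet_mono; auto using cle_refl.
      apply (HA _ b'); auto. apply cmeet_l.
Qed.

Definition CF {I} (X : I -> Frame) := { D : Cb X -> Prop | closed D }.

Lemma CF_eq {I} {X : I -> Frame} (D E : CF X) : (forall b, proj1_sig D b <-> proj1_sig E b) -> D = E.
Proof.
  destruct D as [D HD], E as [E HE]; simpl; intros H.
  assert (D = E) by (apply functional_extensionality; intros b; apply propositional_extensionality; auto).
  subst. f_equal. apply proof_irrelevance.
Qed.

Definition CFtop {I} (X : I -> Frame) : CF X.
Proof. exists (fun _ => True). split; auto. Defined.
Definition CFmeet {I} {X : I -> Frame} (D E : CF X) : CF X.
Proof.
  exists (fun b => proj1_sig D b /\ proj1_sig E b).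
  destruct D as [D HD], E as [E HE]; simpl. split.
  - intros b c Hbc [H1 H2]; split; [apply (proj1 HD b c)|apply (proj1 HE b c)]; auto.
  - intros b a S Hb Hs; split; [apply (proj2 HD b a S)|apply (proj2 HE b a S)]; auto;
      intros s Ss; apply (Hs s Ss).
Defined.
Definition CFjoin {I} {X : I -> Frame} (S : CF X -> Prop) : CF X :=
  exist _ (cl (fun b => exists D, S D /\ proj1_sig D b)) (cl_closed _).

Definition CFrame {I} (X : I -> Frame) : Frame.
Proof.
  refine {| carrier := CF X;
            le := fun D E => forall b, proj1_sig D b -> proj1_sig E b;
            top := CFtop X; meet := CFmeet; join := CFjoin |}.
  - auto.
  - auto.
  - intros a b H1 H2; apply CF_eq; split; auto.
  - simpl; auto.
  - intros a b c; simpl; split; [intros H; split; intros x Hx; apply H; auto|intros [H1 H2] x Hx; auto].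
  - intros S c; split.
    + intros H s Hs b Hb. apply H. apply cl_incl. eauto.
    + intros H b Hb. apply (cl_min (fun b => exists D, S D /\ proj1_sig D b) (proj1_sig c)); auto. apply (proj2_sig c).
      intros x [D [HD Hx]]. eapply H; eauto.
  - intros a S. apply CF_eq. simpl. intros b; split.
    + intros [Ha Hb].
      pose (C := cl (fun b0 : Cb X => exists D : CF X, (exists b1 : CF X, S b1 /\ D = CFmeet a b1) /\ proj1_sig D b0)).
      assert (HT : forall x, cl (fun b0 => exists D, S D /\ proj1_sig D b0) x ->
                  forall b', cle b' x -> proj1_sig a b' -> C b').
      { apply (cl_min (fun b => exists D, S D /\ proj1_sig D b) (fun x => forall b', cle b' x -> proj1_sig a b' -> C b')). apply loc_closed. apply (proj1 (proj2_sig a)). apply cl_closed.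
        intros x [D [HD Hx]] b' Hb' Ha'. apply cl_incl. exists (CFmeet a D). split; eauto.
        simpl. split; auto. apply (proj1 (proj2_sig D) b' x); auto. }
      apply (HT b Hb b); auto using cle_refl.
    + intros H. split.
      * revert b H. apply (cl_min _ (proj1_sig a)). apply (proj2_sig a).
        intros x [D [[b1 [_ ->]] Hx]]. apply Hx.
      * revert b H. apply (cl_min _ (cl (fun b => exists D, S D /\ proj1_sig D b))). apply cl_closed.
        intros x [D [[b1 [Hb1 ->]] Hx]]. apply cl_incl. exists b1. split; auto. apply Hx.
Defined.

Lemma cl_mono {I} {X : I -> Frame} (A B : Cb X -> Prop) : (forall x, A x -> B x) -> forall x, cl A x -> cl B x.
Proof. intros H. apply cl_min. apply cl_closed. intros; apply cl_incl; auto. Qed.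

Lemma cl_inter {I} {X : I -> Frame} (A B : Cb X -> Prop) :
  (forall b c, cle b c -> A c -> A b) -> (forall b c, cle b c -> B c -> B b) ->
  forall x, cl A x -> cl B x -> cl (fun y => A y /\ B y) x.
Proof.
  intros HA HB.
  assert (H1 : forall x, cl A x -> forall b', cle b' x -> B b' -> cl (fun y => A y /\ B y) b').
  { apply (cl_min A (fun x => forall b', cle b' x -> B b' -> cl (fun y => A y /\ B y) b')).
    apply loc_closed; auto. apply cl_closed.
    intros x Ax b' Hb' Bb'. apply cl_incl. split; auto. eapply HA; eauto. }
  assert (H2 : forall x, cl B x -> forall b', cle b' x -> cl A b' -> cl (fun y => A y /\ B y) b').
  { apply (cl_min B (fun x => forall b', cle b' x -> cl A b' -> cl (fun y => A y /\ B y) b')).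
    apply loc_closed; auto. apply (proj1 (cl_closed A)). apply cl_closed.
    intros x Bx b' Hb' Ab'. apply (H1 b' Ab' b'); auto using cle_refl. eapply HB; eauto. }
  intros x Hx1 Hx2. apply (H2 x Hx2 x); auto using cle_refl.
Qed.

Definition fbase {I} {X : I -> Frame} (a : I) (x : X a) : Cb X -> Prop := fun b => le (b a) x.
Definition fhom {I} (X : I -> Frame) (a : I) (x : X a) : CFrame X :=
  exist _ (cl (fbase a x)) (cl_closed _).

Lemma fbase_down {I} {X : I -> Frame} a (x : X a) : forall b c, cle b c -> fbase a x c -> fbase a x b.
Proof. intros b c H Hc. unfold fbase in *. eapply le_trans; eauto. Qed.

Lemma fhom_hom {I} (X : I -> Frame) (hI : dec_eq I) a : frame_hom (X a) (CFrame X) (fhom X a).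
Proof.
  split; [|split].
  - apply CF_eq. simpl. intros b; split; auto. intros _. apply cl_incl. apply top_spec.
  - intros x y. apply CF_eq. simpl. intros b; split.
    + intros H; split; revert b H; apply cl_mono; intros c Hc; unfold fbase in *;
        (eapply le_trans; [exact Hc|]); [apply meet_l|apply meet_r].
    + intros [H1 H2]. generalize (cl_inter _ _ (fbase_down a x) (fbase_down a y) b H1 H2).
      apply cl_mono. intros c [Hc1 Hc2]. apply meet_gl; auto.
  - intros S. apply CF_eq. simpl. intros b; split.
    + revert b. apply cl_min. apply cl_closed. intros c Hc.
      apply (proj2 (cl_closed _) c a S Hc). intros s Ss. apply cl_incl. idtac.
      exists (fhom X a s). split. exists s; auto. simpl. apply cl_incl.
      unfold fbase, cmeet. rewrite (delta_eq hI). apply meet_r.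
    + revert b. apply cl_min. apply cl_closed. intros c [D [[s [Ss ->]] Hc]].
      simpl in Hc. revert c Hc. apply cl_mono. intros c Hc. unfold fbase in *.
      eapply le_trans; [exact Hc|]. apply join_ub; auto.
Qed.

Lemma CF_pos {I} (X : I -> Frame) (hI : dec_eq I) (hovert : forall a, overt (X a))
  (T : Cb X -> Prop) b : (forall a, positive_elt (b a)) -> cl T b -> exists t, T t.
Proof.
  intros Hb Hcl.
  refine (cl_min T (fun b => (forall a, positive_elt (b a)) -> exists t, T t) _ _ b Hcl Hb).
  - split.
    + intros c d Hcd Hd Hc. apply Hd. intros a. apply (pos_up _ (c a)); auto.
    + intros c a S Hc Hs Hpos.
      assert (Hc' : le (c a) (join (fun x => exists s, S s /\ x = meet (c a) s))).
      { rewrite <- distrib. apply meet_gl; auto using le_refl. }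
      destruct (proj2 (overt_facts _ (hovert a)) _ _ (Hpos a) Hc') as [t [[s [Ss ->]] Ht]].
      apply (Hs s Ss). intros a'. destruct (hI a a') as [<-|Hne].
      * unfold cmeet. rewrite (delta_eq hI). auto.
      * unfold cmeet. rewrite (delta_neq _ _ _ Hne). rewrite meet_top. auto.
  - intros x Tx _. eauto.
Qed.

Definition pg {I} {X : I -> Frame} {P : Frame} (iota : forall a, X a -> P)
  (l : list {a : I & X a}) : P :=
  fold_right (fun e acc => meet (iota (projT1 e) (projT2 e)) acc) top l.
Definition idx {I} {X : I -> Frame} (l : list {a : I & X a}) : list I := map (@projT1 _ _) l.
Definition allpos {I} {X : I -> Frame} (l : list {a : I & X a}) : Prop :=
  Forall (fun e : {a : I & X a} => positive_elt (X := X (projT1 e)) (projT2 e)) l.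
Definition Gs {I} {X : I -> Frame} {P : Frame} (iota : forall a, X a -> P) (v : P) : Prop :=
  exists l, NoDup (idx l) /\ allpos l /\ v = pg iota l.
Definition bl {I} {X : I -> Frame} (l : list {a : I & X a}) : Cb X :=
  fold_right (fun e acc => cmeet (delta (projT1 e) (projT2 e)) acc) (fun _ => top) l.

Lemma bl_notin {I} {X : I -> Frame} (l : list {a : I & X a}) bt :
  ~ In bt (idx l) -> bl l bt = top.
Proof.
  induction l as [|[a p] l IH]; simpl; auto. intros H. unfold cmeet.
  rewrite delta_neq by (intros ->; auto). rewrite IH by auto. apply meet_top.
Qed.

Lemma bl_pos {I} {X : I -> Frame} (hI : dec_eq I) (hpos : forall a, positive_locale (X a))
  (l : list {a : I & X a}) : NoDup (idx l) -> allpos l -> forall bt, positive_elt (bl l bt).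
Proof.
  induction l as [|[a p] l IH]; simpl; intros Hnd Hap bt.
  - apply hpos.
  - inversion Hnd; subst. inversion Hap; subst. unfold cmeet.
    destruct (hI a bt) as [<-|Hne].
    + rewrite (delta_eq hI). rewrite bl_notin by auto. rewrite meet_top. auto.
    + rewrite delta_neq by auto. rewrite top_meet. auto.
Qed.

Lemma h_pg {I} (X : I -> Frame) (hI : dec_eq I) (P : Frame) (iota : forall a, X a -> P)
  (h : P -> CFrame X) : frame_hom P (CFrame X) h -> (forall a x, h (iota a x) = fhom X a x) ->
  forall l, proj1_sig (h (pg iota l)) (bl l).
Proof.
  intros [Ht [Hm _]] Hi. induction l as [|[a p] l IH]; simpl.
  - rewrite Ht. simpl. auto.
  - rewrite Hm. simpl. split.
    + rewrite Hi. simpl. apply cl_incl. unfold fbase, cmeet. simpl.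
      rewrite (delta_eq hI). apply meet_l.
    + apply (proj1 (proj2_sig (h (pg iota l))) _ (bl l)); auto. apply cmeet_r.
Qed.

Lemma G_pos {I} (X : I -> Frame) (hI : dec_eq I) (hpos : forall a, positive_locale (X a))
  (hovert : forall a, overt (X a)) (P : Frame) (iota : forall a, X a -> P)
  (hP : is_frame_coproduct X P iota) :
  forall v, Gs iota v -> positive_elt v.
Proof.
  intros v [l [Hnd [Hap ->]]] S HS.
  destruct (proj1 (proj2 hP (CFrame X) (fhom X) (fhom_hom X hI))) as [h [Hh Hi]].
  pose proof (hom_mono _ _ h Hh _ _ HS) as H1.
  rewrite (proj2 (proj2 Hh)) in H1.
  pose proof (H1 _ (h_pg X hI P iota h Hh Hi l)) as H2. simpl in H2.
  destruct (CF_pos X hI hovert _ _ (bl_pos hI hpos l Hnd Hap) H2) as [t [D [[s [Ss _]] _]]].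
  eauto.
Qed.

Definition Dp {I} {X : I -> Frame} {P : Frame} (iota : forall a, X a -> P) (u : P) : Prop :=
  le u (join (fun v => le v u /\ Gs iota v)).

Lemma Gs_Dp {I} {X : I -> Frame} {P : Frame} (iota : forall a, X a -> P) v : Gs iota v -> Dp iota v.
Proof. intros H. apply join_ub. split; auto using le_refl. Qed.

Lemma Dp_cover {I} {X : I -> Frame} {P : Frame} (iota : forall a, X a -> P) u (Z : P -> Prop) :
  le u (join Z) -> (forall z, Z z -> Dp iota z /\ le z u) -> Dp iota u.
Proof.
  intros Hu HZ. unfold Dp. eapply le_trans; [exact Hu|]. apply join_lub. intros z Zz.
  destruct (HZ z Zz) as [Dz Hzu]. eapply le_trans; [exact Dz|]. apply join_lub.
  intros v [Hv Gv]. apply join_ub. split; auto. eapply le_trans; eauto.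
Qed.

Lemma Dp_join {I} {X : I -> Frame} {P : Frame} (iota : forall a, X a -> P) (S : P -> Prop) :
  (forall s, S s -> Dp iota s) -> Dp iota (join S).
Proof.
  intros H. apply (Dp_cover _ _ S); auto using le_refl. intros z Sz; split; auto. apply join_ub; auto.
Qed.

Lemma Dp_meet_gen {I} {X : I -> Frame} {P : Frame} (iota : forall a, X a -> P) (a b : P) :
  Dp iota a -> (forall z, Gs iota z -> le z a -> Dp iota (meet z b)) -> Dp iota (meet a b).
Proof.
  intros Da H.
  apply (Dp_cover _ _ (fun x => exists z, (le z a /\ Gs iota z) /\ x = meet b z)).
  - rewrite <- distrib. rewrite (meet_comm _ a b). apply meet_mono; auto using le_refl.
  - intros x [z [[Hz Gz] ->]]. rewrite meet_comm. split; auto.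
    apply meet_mono; auto using le_refl.
Qed.

Lemma In_dec_p {I} (hI : dec_eq I) (a : I) l : In a l \/ ~ In a l.
Proof.
  induction l as [|b l IH]; simpl; auto.
  destruct (hI b a); auto. destruct IH; auto. right; intros [|]; auto.
Qed.

Lemma merge {I} (X : I -> Frame) (hI : dec_eq I) (hovert : forall a, overt (X a)) (P : Frame)
  (iota : forall a, X a -> P) (Hh : forall a, frame_hom (X a) P (iota a)) a (p : X a) :
  forall l, NoDup (idx l) -> allpos l -> In a (idx l) ->
  le (meet (pg iota l) (iota a p))
     (join (fun w => exists l'', idx l'' = idx l /\ allpos l'' /\ w = pg iota l'' /\
                       le w (meet (pg iota l) (iota a p)))).
Proof.
  induction l as [|[b q] l IH]; simpl; [tauto|]. intros Hnd Hap Hin.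
  inversion Hnd; subst. inversion Hap; subst. simpl in *.
  destruct (hI b a) as [<-|Hne].
  - set (R := fun r : X b => le r (meet q p) /\ positive_elt r).
    assert (K1 : le (meet (meet (iota b q) (pg iota l)) (iota b p))
                    (meet (pg iota l) (join (img (iota b) R)))).
    { rewrite <- (proj2 (proj2 (Hh b))). apply meet_gl.
      - eapply le_trans; [apply meet_l|apply meet_r].
      - eapply le_trans; [|apply (hom_mono _ _ _ (Hh b) _ _ (proj1 (overt_facts _ (hovert b)) (meet q p)))].
        rewrite (proj1 (proj2 (Hh b))). apply meet_mono; auto using le_refl, meet_l. }
    eapply le_trans; [exact K1|]. rewrite distrib. apply join_lub.
    intros x [y [[r [[Hr1 Hr2] ->]] ->]].
    eapply le_trans; [|apply join_ub].
    + rewrite meet_comm. apply le_refl.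
    + exists (existT _ b r :: l). simpl. split; [reflexivity|]. split; [constructor; auto|].
      split; [reflexivity|]. apply meet_gl.
      * apply meet_mono; auto using le_refl. apply (hom_mono _ _ _ (Hh b)).
        eapply le_trans; [exact Hr1|apply meet_l].
      * eapply le_trans; [apply meet_l|]. apply (hom_mono _ _ _ (Hh b)).
        eapply le_trans; [exact Hr1|apply meet_r].
  - destruct Hin as [E|Hin]; [congruence|].
    specialize (IH H2 H4 Hin).
    assert (K1 : le (meet (meet (iota b q) (pg iota l)) (iota a p))
                    (meet (iota b q) (join (fun w => exists l'', idx l'' = idx l /\ allpos l'' /\ w = pg iota l'' /\
                       le w (meet (pg iota l) (iota a p)))))).
    { apply meet_gl. eapply le_trans; apply meet_l.
      eapply le_trans; [|exact IH]. apply meet_mono; auto using le_refl, meet_r. }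
    eapply le_trans; [exact K1|]. rewrite distrib. apply join_lub.
    intros x [w [[l'' [Hi [Ha [-> Hw]]]] ->]].
    apply join_ub. exists (existT _ b q :: l''). simpl. rewrite Hi.
    split; [reflexivity|]. split; [constructor; auto|]. split; [reflexivity|].
    apply meet_gl.
    + apply meet_gl; [apply meet_l|]. eapply le_trans; [apply meet_r|]. eapply le_trans; [exact Hw|apply meet_l].
    + eapply le_trans; [apply meet_r|]. eapply le_trans; [exact Hw|apply meet_r].
Qed.

Lemma Gs_meet_iota {I} (X : I -> Frame) (hI : dec_eq I) (hovert : forall a, overt (X a)) (P : Frame)
  (iota : forall a, X a -> P) (Hh : forall a, frame_hom (X a) P (iota a)) a (p : X a) z :
  positive_elt p -> Gs iota z -> Dp iota (meet z (iota a p)).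
Proof.
  intros Hp [l [Hnd [Hap ->]]].
  destruct (In_dec_p hI a (idx l)) as [Hin|Hnin].
  - eapply Dp_cover; [apply (merge X hI hovert P iota Hh a p l Hnd Hap Hin)|].
    intros w [l'' [Hi [Ha [-> Hw]]]]. split; auto. apply Gs_Dp. exists l''.
    rewrite Hi. auto.
  - apply Gs_Dp. exists (existT _ a p :: l). simpl. split; [constructor; auto|].
    split; [constructor; auto|]. apply meet_comm.
Qed.

Lemma Gs_meet {I} (X : I -> Frame) (hI : dec_eq I) (hovert : forall a, overt (X a)) (P : Frame)
  (iota : forall a, X a -> P) (Hh : forall a, frame_hom (X a) P (iota a)) :
  forall m, allpos m -> forall v, Gs iota v -> Dp iota (meet v (pg iota m)).
Proof.
  induction m as [|[a p] m IH]; simpl; intros Hap v Gv.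
  - rewrite meet_top. apply Gs_Dp; auto.
  - inversion Hap; subst. simpl in *.
    assert (E : meet v (meet (iota a p) (pg iota m)) = meet (meet v (iota a p)) (pg iota m)).
    { apply le_antisym; repeat apply meet_gl.
      - apply meet_l.
      - eapply le_trans; [apply meet_r|apply meet_l].
      - eapply le_trans; [apply meet_r|apply meet_r].
      - eapply le_trans; [apply meet_l|apply meet_l].
      - eapply le_trans; [apply meet_l|apply meet_r].
      - apply meet_r. }
    rewrite E. apply Dp_meet_gen.
    + apply (Gs_meet_iota X hI hovert P iota Hh); auto.
    + intros z Gz _. apply IH; auto.
Qed.

Lemma Dp_meet {I} (X : I -> Frame) (hI : dec_eq I) (hovert : forall a, overt (X a)) (P : Frame)
  (iota : forall a, X a -> P) (Hh : forall a, frame_hom (X a) P (iota a)) (a b : P) :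
  Dp iota a -> Dp iota b -> Dp iota (meet a b).
Proof.
  intros Da Db. apply Dp_meet_gen; auto. intros z Gz _.
  rewrite meet_comm. apply Dp_meet_gen; auto. intros z' Gz' _.
  destruct Gz as [m [_ [Hm ->]]]. apply (Gs_meet X hI hovert P iota Hh); auto.
Qed.

Lemma Dp_iota {I} (X : I -> Frame) (hovert : forall a, overt (X a)) (P : Frame)
  (iota : forall a, X a -> P) (Hh : forall a, frame_hom (X a) P (iota a)) a (x : X a) :
  Dp iota (iota a x).
Proof.
  pose proof (hom_mono _ _ _ (Hh a) _ _ (proj1 (overt_facts _ (hovert a)) x)) as H.
  rewrite (proj2 (proj2 (Hh a))) in H.
  eapply Dp_cover; [exact H|]. intros z [r [[Hr Hpr] ->]]. split.
  - apply Gs_Dp. exists (existT _ a r :: nil). simpl. split; [constructor; auto; constructor|].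
    split; [constructor; auto|]. symmetry; apply meet_top.
  - apply (hom_mono _ _ _ (Hh a)); auto.
Qed.

Lemma Gs_top {I} {X : I -> Frame} {P : Frame} (iota : forall a, X a -> P) : Gs iota top.
Proof. exists nil. simpl. split; [constructor|]. split; [constructor|reflexivity]. Qed.

Lemma sig_eq' {P : Frame} (D : P -> Prop) (u v : {x : P | D x}) : proj1_sig u = proj1_sig v -> u = v.
Proof. destruct u, v; simpl; intros ->. f_equal. apply proof_irrelevance. Qed.

Definition SubF {I} (X : I -> Frame) (hI : dec_eq I) (hovert : forall a, overt (X a)) (P : Frame)
  (iota : forall a, X a -> P) (Hh : forall a, frame_hom (X a) P (iota a)) : Frame.
Proof.
  refine {| carrier := {u : P | Dp iota u};
            le := fun u v => le (proj1_sig u) (proj1_sig v);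
            top := exist _ top (Gs_Dp _ _ (Gs_top iota));
            meet := fun u v => exist _ (meet (proj1_sig u) (proj1_sig v))
                       (Dp_meet X hI hovert P iota Hh _ _ (proj2_sig u) (proj2_sig v));
            join := fun S => exist _ (join (img (@proj1_sig _ _) S))
                       (Dp_join iota _ (fun s Hs => match Hs with ex_intro _ x (conj _ E) =>
                          eq_ind_r (Dp iota) (proj2_sig x) E end)) |}.
  - intros; apply le_refl.
  - intros; eapply le_trans; eauto.
  - intros a b H1 H2. apply sig_eq'. apply le_antisym; auto.
  - intros; apply top_spec.
  - intros; simpl; apply meet_spec.
  - intros S c; simpl. rewrite join_spec. split.
    + intros H s Hs. apply H. exists s; auto.
    + intros H s [x [Hx ->]]. auto.
  - intros a S. apply sig_eq'. simpl. rewrite distrib. apply join_ext. intros x; split.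
    + intros [b [[s [Ss ->]] ->]]. exists (exist _ (meet (proj1_sig a) (proj1_sig s))
                       (Dp_meet X hI hovert P iota Hh _ _ (proj2_sig a) (proj2_sig s))).
      split; auto. exists s; auto.
    + intros [y [[b [Sb ->]] ->]]. simpl. exists (proj1_sig b). split; auto. exists b; auto.
Defined.

Theorem mainTheorem4 (I : Type) (X : I -> Frame) (P : Frame)
  (iota : forall alpha, X alpha -> P)
  (hI : dec_eq I)
  (hpos : forall alpha, positive_locale (X alpha))
  (hovert : forall alpha, overt (X alpha))
  (hP : is_frame_coproduct X P iota) :
  positive_locale P /\ overt P.
Proof.
  pose proof (proj1 hP) as Hh.
  set (S := SubF X hI hovert P iota Hh).
  set (iota' := fun a (x : X a) => (exist _ (iota a x) (Dp_iota X hovert P iota Hh a x) : S)).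
  assert (Hi' : forall a, frame_hom (X a) S (iota' a)).
  { intros a. destruct (Hh a) as [Ht [Hm Hj]]. split; [|split].
    - apply sig_eq'. simpl. apply Ht.
    - intros x y. apply sig_eq'. simpl. apply Hm.
    - intros T. apply sig_eq'. simpl. rewrite Hj. apply join_ext. intros y; split.
      + intros [s [Ts ->]]. exists (iota' a s). split; auto. exists s; auto.
      + intros [z [[s [Ts ->]] ->]]. exists s; auto. }
  destruct (proj2 hP S iota' Hi') as [[g [Hg Hgi]] Huniq].
  assert (Hk : frame_hom P P (fun y => proj1_sig (g y))).
  { destruct Hg as [Ht [Hm Hj]]. split; [|split].
    - rewrite Ht. reflexivity.
    - intros a b. rewrite Hm. reflexivity.
    - intros T. rewrite Hj. simpl. apply join_ext. intros y; split.
      + intros [z [[s [Ts ->]] ->]]. exists s; auto.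
      + intros [s [Ts ->]]. exists (g s). split; auto. exists s; auto. }
  assert (Hid : frame_hom P P (fun y => y)).
  { split; [reflexivity|split; [reflexivity|]]. intros T. apply join_ext. intros y; split.
    - intros Ty. exists y; auto.
    - intros [s [Ts ->]]; auto. }
  assert (HD : forall y, Dp iota y).
  { intros y. destruct (proj2 hP P iota Hh) as [_ HuP]. assert (E : proj1_sig (g y) = y) by (apply (HuP _ _ Hk Hid); [intros a x; rewrite Hgi; reflexivity|reflexivity]). rewrite <- E. apply (proj2_sig (g y)). }
  split.
  - apply (G_pos X hI hpos hovert P iota hP). apply Gs_top.
  - exists (fun u => positive_elt u). intros u p. split.
    + intros H. eapply le_trans; [apply (HD u)|]. apply join_lub. intros v [Hvu Gv].
      assert (Hp : p) by (apply H; eapply pos_up; [apply (G_pos X hI hpos hovert P iota hP); exact Gv|exact Hvu]).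
      eapply le_trans; [apply top_spec|]. apply join_ub. auto.
    + intros H Hu. destruct (Hu _ H) as [x [_ Hx]]. exact Hx.
Qed.
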